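(* Let $\rho=(a^b)$ be a partition of $n=ab$ with $a,b\ge 3$, and let $\alpha(\rho)=(a+1,a^{\,b-2},a-1)$ and $\beta(\rho)=(a^{\,b-1},a-1,1)$. Then each of $\alpha(\rho)$ and $\beta(\rho)$ belongs to a clique of size $4$ in $G_n$. In particular, $\alpha(\rho),\beta(\rho)\in\bigcup_{r\ge 3}L_r(n)$, i.e. both have local simplex dimension at least $3$.
   Context: The partition graph $G_n$ has as vertices the integer partitions of $n$; two partitions are adjacent if one is obtained from the other by a single elementary unit transfer followed by reordering: decrease one part by $1$ and either increase a different part by $1$ or create a new part equal to $1$, then delete a part that became $0$ and sort in nonincreasing order (the result being different from the original). Exponent notation $a^k$ denotes $k$ parts equal to $a$. The local simplex dimension of a vertex $v$ is $m-1$ where $m$ is the largest size of a clique of $G_n$ containing $v$; $L_r(n)$ is the set of vertices of local simplex dimension $r$. *)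

(* Defs.v *)
From mathcomp Require Import all_boot.
Set Implicit Arguments. Unset Strict Implicit. Unset Printing Implicit Defensive.

Definition is_partition (n : nat) (p : seq nat) : Prop :=
  [/\ sorted geq p, all (fun x => 0 < x) p & sumn p = n].

(* Elementary unit transfer: decrease part i by 1, then increase part j by 1
   (j = size p means "create a new part equal to 1"), delete zero parts, and
   sort in nonincreasing order. *)
Definition transfer (p : seq nat) (i j : nat) : seq nat :=
  sort geq (filter (fun x => x != 0)
    (incr_nth (set_nth 0 p i (nth 0 p i).-1) j)).

Definition move (p q : seq nat) : Prop :=
  exists i j, [/\ i < size p, j <= size p, i <> j, transfer p i j = q & q <> p].

Definition adj (p q : seq nat) : Prop := move p q \/ move q p.

Definition is_clique (n : nat) (s : seq (seq nat)) : Prop :=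
  [/\ uniq s, (forall p, p \in s -> is_partition n p)
    & (forall p q, p \in s -> q \in s -> p <> q -> adj p q)].

Definition in_clique_of_size (n : nat) (v : seq nat) (m : nat) : Prop :=
  exists s, [/\ is_clique n s, size s = m & v \in s].

Definition local_simplex_dim (n : nat) (v : seq nat) (r : nat) : Prop :=
  in_clique_of_size n v r.+1 /\ (forall m, in_clique_of_size n v m -> m <= r.+1).

Definition L (r n : nat) (v : seq nat) : Prop :=
  is_partition n v /\ local_simplex_dim n v r.

Definition alpha (a b : nat) : seq nat := (a.+1 :: nseq (b - 2) a) ++ [:: a.-1].
Definition beta (a b : nat) : seq nat := nseq (b - 1) a ++ [:: a.-1; 1].

(* Main.v *)
Require Import Defs.
From mathcomp Require Import all_boot zify.
From Stdlib Require Import Classical.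
Set Implicit Arguments. Unset Strict Implicit.

Lemma set_nth_catR (s1 s2 : seq nat) i y :
  set_nth 0 (s1 ++ s2) (size s1 + i) y = s1 ++ set_nth 0 s2 i y.
Proof. by elim: s1 => //= x s1 ->. Qed.

Lemma incr_nth_catR (s1 s2 : seq nat) i :
  incr_nth (s1 ++ s2) (size s1 + i) = s1 ++ incr_nth s2 i.
Proof. by elim: s1 => //= x s1 ->. Qed.

Lemma nth_catR (s1 s2 : seq nat) i : nth 0 (s1 ++ s2) (size s1 + i) = nth 0 s2 i.
Proof. by rewrite nth_cat ltnNge leq_addr /= addKn. Qed.

Lemma geq_trans : transitive geq.
Proof. move=> x y z /= h1 h2; exact: leq_trans h2 h1. Qed.

Lemma move_ip p i j q : i < size p -> j <= size p -> i != j ->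
  1 < nth 0 p i ->
  incr_nth (set_nth 0 p i (nth 0 p i).-1) j = q ->
  all (fun x => 0 < x) q -> sorted geq q -> q != p -> move p q.
Proof.
move=> hi hj hij hn E hpos hs hq; exists i, j; split => //; first exact/eqP.
  rewrite /transfer E (_ : filter _ q = q); first exact: sorted_sort geq_trans _ hs.
  apply/all_filterP; apply: sub_all hpos => x; lia.
exact/eqP.
Qed.

Lemma adj_neq p q : adj p q -> p <> q.
Proof. by case=> [[i [j [_ _ _ _ h]]]|[i [j [_ _ _ _ h]]]] // E; apply: h. Qed.

Lemma adj_sym p q : adj p q -> adj q p.
Proof. by case; [right|left]. Qed.

Lemma clique4 n p1 p2 p3 p4 :
  is_partition n p1 -> is_partition n p2 -> is_partition n p3 -> is_partition n p4 ->
  adj p1 p2 -> adj p1 p3 -> adj p1 p4 -> adj p2 p3 -> adj p2 p4 -> adj p3 p4 ->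
  is_clique n [:: p1; p2; p3; p4].
Proof.
move=> h1 h2 h3 h4 a12 a13 a14 a23 a24 a34.
have n12 := adj_neq a12; have n13 := adj_neq a13; have n14 := adj_neq a14.
have n23 := adj_neq a23; have n24 := adj_neq a24; have n34 := adj_neq a34.
split.
- rewrite /= !inE !negb_or !andbT.
  by repeat (apply/andP; split); apply/eqP.
- by move=> p; rewrite !inE => /or4P [] /eqP ->.
- move=> p q; rewrite !inE => /or4P [] /eqP -> /or4P [] /eqP -> h //;
  by apply: adj_sym.
Qed.

Lemma bounded_max (P : nat -> Prop) m0 B : P m0 -> (forall m, P m -> m <= B) ->
  exists m, P m /\ forall k, P k -> k <= m.
Proof.
move=> h0 hB.
suff: forall d m, B - m <= d -> P m -> exists m', P m' /\ forall k, P k -> k <= m'.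
  by move/(_ (B - m0) m0 (leqnn _) h0).
elim=> [|d IH] m hd hm.
  exists m; split => // k /hB; lia.
case: (classic (exists k, P k /\ m < k)) => [[k [hk hlt]]|hno].
  apply: (IH k) => //; have := hB _ hk; lia.
exists m; split => // k hk; case: (leqP k m) => // hlt.
by exfalso; apply: hno; exists k.
Qed.

Fixpoint seqs (n k : nat) : seq (seq nat) :=
  if k is k'.+1 then [::] :: [seq x :: s | x <- iota 0 n.+1, s <- seqs n k']
  else [:: [::]].

Lemma seqsS n k : seqs n k.+1 = [::] :: [seq x :: s | x <- iota 0 n.+1, s <- seqs n k].
Proof. by []. Qed.

Lemma mem_seqs n k s : size s <= k -> all (fun x => x <= n) s -> s \in seqs n k.
Proof.
elim: k s => [|k IH] [|x s] //; try by rewrite /= ?in_cons ?eqxx.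
move=> hs /andP [hx ha]; rewrite ltnS in hs.
rewrite seqsS in_cons; apply/orP; right.
apply: (allpairs_f (fun x s => x :: s)); last exact: IH.
by rewrite mem_iota; lia.
Qed.

Lemma part_bound n p : is_partition n p -> p \in seqs n n.
Proof.
case=> _ hpos <-; apply: mem_seqs.
  elim: p hpos => //= x p IH /andP [hx hp]; have := IH hp; lia.
apply/allP; elim: p hpos => //= y p IH /andP [hy hp] x.
rewrite inE => /orP [/eqP ->|/(IH hp x)]; lia.
Qed.

Lemma clique_bound n v m : in_clique_of_size n v m -> m <= size (seqs n n).
Proof.
case=> s [[hu hp _] <- _]; apply: uniq_leq_size => // x /hp; exact: part_bound.
Qed.

Lemma L_of n v : is_partition n v -> in_clique_of_size n v 4 ->
  exists2 r, 3 <= r & L r n v.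
Proof.
move=> hv h4.
have [m [hm hmax]] := bounded_max h4 (@clique_bound n v).
have h4m := hmax _ h4.
exists m.-1; first lia.
split => //; split; rewrite prednK //; lia.
Qed.

Lemma path_nseq x v k s : v <= x -> path geq v s -> path geq x (nseq k v ++ s).
Proof.
elim: k x => [|k IH] x hvx /=.
  by case: s => //= y s /andP [hy ->]; rewrite andbT; apply: leq_trans hy hvx.
by move=> hs; rewrite hvx IH.
Qed.

Lemma part_of n s : sorted geq s -> all (fun x => 0 < x) s -> sumn s = n -> is_partition n s.
Proof. by move=> *; split. Qed.

Ltac posi := rewrite ?all_cat ?all_nseq /= ?andbT; lia.
Ltac sumi := rewrite ?sumn_cat ?sumn_nseq /=; lia.

Section S.
Variables c k : nat.
Let N := nseq k c.+3.
Let s1 := [:: c.+4; c.+3] ++ N.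
Let s0 := [:: c.+3] ++ N.
Definition pA := s1 ++ [:: c.+2].
Definition pX := [:: c.+4.+1; c.+3] ++ N ++ [:: c.+1].
Definition pY := [:: c.+4; c.+4] ++ N ++ [:: c.+1].
Definition pZ := s1 ++ [:: c.+1; 1].
Definition pB := s0 ++ [:: c.+3; c.+2; 1].
Definition pP := [:: c.+4] ++ N ++ [:: c.+2; c.+2; 1].
Definition pQ := s0 ++ [:: c.+2; c.+2; 2].
Definition pR := s0 ++ [:: c.+2; c.+2; 1; 1].

Lemma sz1 : size s1 = k.+2. Proof. by rewrite size_cat size_nseq. Qed.
Lemma sz0 : size s0 = k.+1. Proof. by rewrite size_cat size_nseq. Qed.

Lemma parts n : n = (c.+3) * (k.+3) ->
  [/\ is_partition n pA, is_partition n pX, is_partition n pY & is_partition n pZ] /\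
  [/\ is_partition n pB, is_partition n pP, is_partition n pQ & is_partition n pR].
Proof.
move=> ->; rewrite /pA /pX /pY /pZ /pB /pP /pQ /pR /s1 /s0 /N.
split; split; apply: part_of; try posi; try sumi.
all: rewrite /= ?path_nseq //= ?andbT; lia.
Qed.

Lemma move_ip' n p i j q : is_partition n q -> i < size p -> j <= size p -> i != j ->
  1 < nth 0 p i ->
  incr_nth (set_nth 0 p i (nth 0 p i).-1) j = q -> q != p -> move p q.
Proof. case=> hs hp _ h1 h2 h3 h4 h5 h6; exact: (move_ip h1 h2 h3 h4 h5 hp hs h6). Qed.

Let n := (c.+3) * (k.+3).
Let H := parts (erefl n).

Ltac szs := rewrite ?size_cat ?sz1 ?sz0 ?size_nseq /=; lia.
Ltac neqs := apply/eqP; rewrite /pA /pX /pY /pZ /pB /pP /pQ /pR /s1 /s0 /N;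
  first [ (move/(congr1 size); rewrite /= ?size_cat ?size_nseq /=; lia)
  | (move/(congr1 (head 0)); rewrite /=; lia)
  | (move/(congr1 (last 0)); rewrite /= ?last_cat /=; lia)
  | (move/(congr1 (head 0 \o behead)); rewrite /=; lia) ].

Lemma mAX : move pA pX.
Proof.
case: H => [[hA hX hY hZ] [hB hP hQ hR]].
apply: (@move_ip' n _ (size s1 + 0) (0)) => //.
all: first [ szs | by rewrite /pA /= ?nth_catR | by rewrite /pA nth_catR set_nth_catR | neqs ].
Qed.

Lemma mAY : move pA pY.
Proof.
case: H => [[hA hX hY hZ] [hB hP hQ hR]].
apply: (@move_ip' n _ (size s1 + 0) (1)) => //.
all: first [ szs | by rewrite /pA /= ?nth_catR | by rewrite /pA nth_catR set_nth_catR | neqs ].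
Qed.

Lemma mAZ : move pA pZ.
Proof.
case: H => [[hA hX hY hZ] [hB hP hQ hR]].
apply: (@move_ip' n _ (size s1 + 0) (size s1 + 1)) => //.
all: first [ szs | by rewrite /pA /= ?nth_catR | by rewrite /pA nth_catR set_nth_catR incr_nth_catR | neqs ].
Qed.

Lemma mYX : move pY pX.
Proof.
case: H => [[hA hX hY hZ] [hB hP hQ hR]].
apply: (@move_ip' n _ (1) (0)) => //.
all: first [ szs | by rewrite /pY /= ?nth_catR | by [] | neqs ].
Qed.

Lemma mYZ : move pY pZ.
Proof.
case: H => [[hA hX hY hZ] [hB hP hQ hR]].
apply: (@move_ip' n _ (1) (size s1 + 1)) => //.
all: first [ szs | by rewrite /pY /= ?nth_catR | by have -> : set_nth 0 pY 1 (nth 0 pY 1).-1 = s1 ++ [:: c.+1] by []; rewrite incr_nth_catR | neqs ].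
Qed.

Lemma mXZ : move pX pZ.
Proof.
case: H => [[hA hX hY hZ] [hB hP hQ hR]].
apply: (@move_ip' n _ (0) (size s1 + 1)) => //.
all: first [ szs | by rewrite /pX /= ?nth_catR | by have -> : set_nth 0 pX 0 (nth 0 pX 0).-1 = s1 ++ [:: c.+1] by []; rewrite incr_nth_catR | neqs ].
Qed.

Lemma mBP : move pB pP.
Proof.
case: H => [[hA hX hY hZ] [hB hP hQ hR]].
apply: (@move_ip' n _ (size s0 + 0) (0)) => //.
all: first [ szs | by rewrite /pB /= ?nth_catR | by rewrite /pB nth_catR set_nth_catR | neqs ].
Qed.

Lemma mBQ : move pB pQ.
Proof.
case: H => [[hA hX hY hZ] [hB hP hQ hR]].
apply: (@move_ip' n _ (size s0 + 0) (size s0 + 2)) => //.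
all: first [ szs | by rewrite /pB /= ?nth_catR | by rewrite /pB nth_catR set_nth_catR incr_nth_catR | neqs ].
Qed.

Lemma mBR : move pB pR.
Proof.
case: H => [[hA hX hY hZ] [hB hP hQ hR]].
apply: (@move_ip' n _ (size s0 + 0) (size s0 + 3)) => //.
all: first [ szs | by rewrite /pB /= ?nth_catR | by rewrite /pB nth_catR set_nth_catR incr_nth_catR | neqs ].
Qed.

Lemma mPQ : move pP pQ.
Proof.
case: H => [[hA hX hY hZ] [hB hP hQ hR]].
apply: (@move_ip' n _ (0) (size s0 + 2)) => //.
all: first [ szs | by rewrite /pP /= ?nth_catR | by have -> : set_nth 0 pP 0 (nth 0 pP 0).-1 = s0 ++ [:: c.+2; c.+2; 1] by []; rewrite incr_nth_catR | neqs ].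
Qed.

Lemma mPR : move pP pR.
Proof.
case: H => [[hA hX hY hZ] [hB hP hQ hR]].
apply: (@move_ip' n _ (0) (size s0 + 3)) => //.
all: first [ szs | by rewrite /pP /= ?nth_catR | by have -> : set_nth 0 pP 0 (nth 0 pP 0).-1 = s0 ++ [:: c.+2; c.+2; 1] by []; rewrite incr_nth_catR | neqs ].
Qed.

Lemma mQR : move pQ pR.
Proof.
case: H => [[hA hX hY hZ] [hB hP hQ hR]].
apply: (@move_ip' n _ (size s0 + 2) (size s0 + 3)) => //.
all: first [ szs | by rewrite /pQ /= ?nth_catR | by rewrite /pQ nth_catR set_nth_catR incr_nth_catR | neqs ].
Qed.

End S.

Lemma alphaE c k : alpha c.+3 k.+3 = pA c k.
Proof. by rewrite /alpha /pA (_ : k.+3 - 2 = k.+1) //; lia. Qed.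

Lemma betaE c k : beta c.+3 k.+3 = pB c k.
Proof.
rewrite /beta /pB (_ : k.+3 - 1 = 1 + (k + 1)); last lia.
by rewrite !nseqD -!catA.
Qed.

Unset Implicit Arguments.
Theorem proposition4p7 (a b : nat) (ha : 3 <= a) (hb : 3 <= b) :
  [/\ in_clique_of_size (a * b) (alpha a b) 4,
      in_clique_of_size (a * b) (beta a b) 4,
      (exists2 r, 3 <= r & L r (a * b) (alpha a b))
    & (exists2 r, 3 <= r & L r (a * b) (beta a b))].
Proof.
have [c ->] : exists c, a = c.+3 by exists (a - 3); lia.
have [k ->] : exists k, b = k.+3 by exists (b - 3); lia.
rewrite alphaE betaE.
have [[hA hX hY hZ] [hB hP hQ hR]] := @parts c k _ (erefl _).
have cA : in_clique_of_size (c.+3 * k.+3) (pA c k) 4.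
  exists [:: pA c k; pX c k; pY c k; pZ c k]; split => //; last by rewrite mem_head.
  apply: clique4 => //.
  - by left; apply: mAX.
  - by left; apply: mAY.
  - by left; apply: mAZ.
  - by right; apply: mYX.
  - by left; apply: mXZ.
  - by left; apply: mYZ.
have cB : in_clique_of_size (c.+3 * k.+3) (pB c k) 4.
  exists [:: pB c k; pP c k; pQ c k; pR c k]; split => //; last by rewrite mem_head.
  apply: clique4 => //.
  - by left; apply: mBP.
  - by left; apply: mBQ.
  - by left; apply: mBR.
  - by left; apply: mPQ.
  - by left; apply: mPR.
  - by left; apply: mQR.
by split => //; apply: L_of.
Qed.
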